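(* Let $G$ be a finite simple graph with adjacency matrix $A$, let $x$ be a vertex of $G$, and let $X$ be the set of neighbours of $x$ in $G$ (assume $0<|X|<|V(G)|$). Let $G_X$ be the graph obtained from $G$ by Seidel switching with respect to $X$. Then $x$ is an isolated vertex of $G_X$. Moreover, $\mathrm{2\text{-}rank}(G_X)=\mathrm{2\text{-}rank}(G)-2$ if $\mathbf{1}\in\mathrm{Col}_2(G)$, and $\mathrm{2\text{-}rank}(G_X)=\mathrm{2\text{-}rank}(G)$ otherwise.
   Context: All graphs are finite, simple and undirected. The 2-rank of a graph $G$, written $\mathrm{2\text{-}rank}(G)$, is the rank over $\mathbb{F}_2$ of its adjacency matrix. $\mathrm{Col}_2(G)$ denotes the column space over $\mathbb{F}_2$ of the adjacency matrix of $G$, and $\mathbf{1}$ is the all-ones vector. For a vertex subset $X$ of a graph $G=(V,E)$, Seidel switching with respect to $X$ produces the graph on $V$ in which all edges between $X$ and $V\setminus X$ are removed and every non-edge between $X$ and $V\setminus X$ is made an edge, while edges with both ends in $X$ or both ends in $V\setminus X$ are unchanged. *)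

(* Defs.v *)
From HB Require Import structures.
From mathcomp Require Import all_boot all_order all_algebra.
Set Implicit Arguments. Unset Strict Implicit. Unset Printing Implicit Defensive.
Import GRing.Theory.
Local Open Scope ring_scope.

Definition simple_graph (n : nat) (e : rel 'I_n) : Prop :=
  symmetric e /\ irreflexive e.

Definition adjmx2 (n : nat) (e : rel 'I_n) : 'M['F_2]_n :=
  \matrix_(i, j) ((e i j : nat)%:R).

Definition two_rank (n : nat) (e : rel 'I_n) : nat := \rank (adjmx2 e).

Definition ones2 (n : nat) : 'cV['F_2]_n := const_mx 1.

(* v lies in the column space over F_2 of the adjacency matrix of e:
   the column space of A is the row space of A^T. *)
Definition in_Col2 (n : nat) (e : rel 'I_n) (v : 'cV['F_2]_n) : bool :=
  (v^T <= (adjmx2 e)^T)%MS.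

Definition seidel_switch (n : nat) (e : rel 'I_n) (X : {set 'I_n}) : rel 'I_n :=
  fun u v => if (u \in X) == (v \in X) then e u v else ~~ e u v.

Definition isolated (n : nat) (e : rel 'I_n) (x : 'I_n) : Prop :=
  forall y, ~~ e x y.

(* Main.v *)
Require Import Defs.
From HB Require Import structures.
From mathcomp Require Import all_boot all_order all_algebra.
Import GRing.Theory.
Local Open Scope ring_scope.
Lemma two0 : (1 + 1 : 'F_2) = 0. Proof. by apply/val_inj. Qed.
Lemma f2 (x : 'F_2) : x = 0 \/ x = 1.
Proof. case: x => [[|[|m]] Hm]; [left|right|]; try by apply/val_inj. by []. Qed.
Lemma addxx (x : 'F_2) : x + x = 0.
Proof. by case: (f2 x) => ->; rewrite ?addr0 ?two0. Qed.

Lemma alt_sum n (f : 'I_n -> 'I_n -> 'F_2) (Hs : forall i k, f i k = f k i)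
  (Hd : forall i, f i i = 0) : \sum_i \sum_k f i k = 0.
Proof.
have E i k : f i k = (if (i < k)%N then f i k else 0) + (if (k < i)%N then f i k else 0).
  by case: (ltngtP i k) => [h|h|/val_inj ->]; rewrite ?addr0 ?add0r ?Hd.
rewrite (eq_bigr (fun i : 'I_n => \sum_(k : 'I_n) ((if (i<k)%N then f i k else 0) + (if (k<i)%N then f i k else 0)))); last by move=> i _; apply: eq_bigr => k _; exact: E.
under eq_bigr do rewrite big_split /=.
rewrite big_split /= [X in _ + X]exchange_big /=.
rewrite [X in _ + X](eq_bigr (fun i : 'I_n => \sum_(k : 'I_n) (if (i<k)%N then f i k else 0))) ?addxx // => i _.
by apply: eq_bigr => k _; rewrite Hs.
Qed.

Lemma alt_form n (A : 'M['F_2]_n) (w : 'rV_n) : A^T = A -> (forall i, A i i = 0) ->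
  w *m A *m w^T = 0.
Proof.
move=> sA dA; apply/matrixP => i j; rewrite !mxE (ord1 i) (ord1 j).
rewrite (eq_bigr (fun k => \sum_l w 0 l * A l k * w 0 k)); last first.
  by move=> k _; rewrite !mxE mulr_suml.
rewrite exchange_big /=; apply: alt_sum => [l k|l]; last by rewrite dA mulr0 mul0r.
have := congr1 (fun M : 'M_n => M k l) sA; rewrite mxE => ->.
by rewrite mulrAC -!mulrA [w 0 l * _]mulrC !mulrA.
Qed.
From mathcomp Require Import zify.
Lemma dual n (A : 'M['F_2]_n) (v : 'rV_n) : ~~ (v <= A)%MS ->
  exists z : 'rV_n, z *m A^T = 0 /\ v *m z^T != 0.
Proof.
move=> nvA.
case: (boolP [exists z : 'rV_n, (z *m A^T == 0) && (v *m z^T != 0)]).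
  by case/existsP => z /andP[/eqP h1 h2]; exists z.
rewrite negb_exists => /forallP H.
have H' (z : 'rV_n) : z *m A^T = 0 -> v *m z^T = 0.
  by move=> h; have := H z; rewrite h eqxx /= negbK => /eqP.
have sub: (kermx A^T <= kermx (row_mx A^T v^T))%MS.
  apply/row_subP => i; apply/sub_kermxP; rewrite mul_mx_row.
  have h : row i (kermx A^T) *m A^T = 0 by apply/sub_kermxP; exact: row_sub.
  rewrite h (_ : _ *m v^T = 0) ?row_mx0 //.
  by rewrite -[LHS]trmxK trmx_mul trmxK H' ?trmx0.
have := mxrankS sub; rewrite !mxrank_ker => hle.
have r1 := rank_leq_row (row_mx A^T v^T).
have r2 := rank_leq_row A^T.
have hr : (\rank (A + v) <= \rank A)%N.
  rewrite addsmxE -mxrank_tr tr_col_mx -(mxrank_tr A).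
  move: hle r1 r2; move: (\rank (row_mx _ _)) (\rank A^T) => p q; lia.
have : (A + v <= A)%MS.
  by rewrite -(mxrank_leqif_sup (addsmxSl A v)).2 eqn_leq hr mxrankS ?addsmxSl.
by rewrite addsmx_sub (negbTE nvA) andbF.
Qed.

Lemma addxxM m n (M : 'M['F_2]_(m,n)) : M + M = 0.
Proof. by apply/matrixP => i j; rewrite !mxE addxx. Qed.

Lemma mx1_01 (c : 'M['F_2]_1) : c != 0 -> c = 1%:M.
Proof.
move=> h; rewrite [c]mx11_scalar; case: (f2 (c 0 0)) => h0; last by rewrite h0.
by move: h; rewrite [c]mx11_scalar h0 raddf0 eqxx.
Qed.

Lemma one_neq0 : (1%:M : 'M['F_2]_1) != 0.
Proof. by apply/negP => /eqP/matrixP/(_ 0 0); rewrite !mxE. Qed.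

Theorem lemma2p1 (n : nat) (e : rel 'I_n) (x : 'I_n) :
  simple_graph e ->
  (0 < #|[set y | e x y]| < n)%N ->
  isolated (seidel_switch e [set y | e x y]) x /\
  (if in_Col2 e (ones2 n)
   then (two_rank (seidel_switch e [set y | e x y]) + 2)%N = two_rank e
   else two_rank (seidel_switch e [set y | e x y]) = two_rank e).
Proof.
move=> [sym irr] /andP[Xpos _].
set X := [set y | e x y].
have iso : isolated (seidel_switch e X) x.
  by move=> y; rewrite /seidel_switch !inE irr /=; case: (e x y).
split => //.
rewrite /in_Col2 /two_rank.
set A := adjmx2 e; set B := adjmx2 (seidel_switch e X).
have symA : A^T = A by apply/matrixP => i j; rewrite !mxE sym.
have dA i : A i i = 0 by rewrite mxE irr.
have symB : B^T = B.
  by apply/matrixP => i j; rewrite !mxE /seidel_switch sym eq_sym.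
pose ex : 'rV['F_2]_n := delta_mx 0 x.
set a := row x A.
set jr : 'rV['F_2]_n := const_mx 1.
have ha : a = ex *m A by rewrite /a rowE.
have Bx : B *m ex^T = 0.
  rewrite trmx_delta -colE; apply/matrixP => i j; rewrite !mxE.
  have -> : seidel_switch e X i x = seidel_switch e X x i.
    by rewrite /seidel_switch sym eq_sym.
  by rewrite (negbTE (iso i)).
have exB : ex *m B = 0 by rewrite -[ex]trmxK -symB -trmx_mul Bx trmx0.
have hB : B = A + a^T *m jr + jr^T *m a.
  apply/matrixP => i k; rewrite !mxE !big_ord1 !mxE /seidel_switch !inE.
  case: (e x i); case: (e x k); case: (e i k) => /=;
  by rewrite ?mulr1n ?mulr0n ?mulr1 ?mul1r ?mulr0 ?mul0r ?addr0 ?add0r ?two0 ?add0r.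
have aex : a *m ex^T = 0.
  by rewrite trmx_delta -colE; apply/matrixP => i j; rewrite !mxE irr.
have jex : jr *m ex^T = 1%:M.
  rewrite trmx_delta -colE; apply/matrixP => i j.
  by rewrite !mxE (ord1 i) (ord1 j).
have a0 : a != 0.
  move: Xpos; rewrite card_gt0 => /set0Pn [y]; rewrite inE => hy.
  apply/negP => /eqP/matrixP/(_ 0 y); rewrite !mxE hy => /eqP.
  by rewrite oner_eq0.
have j0 : jr != 0.
  apply/negP => /eqP/matrixP/(_ 0 x); rewrite !mxE => /eqP.
  by rewrite oner_eq0.
have ra : \rank a = 1%N by rewrite rank_rV a0.
have rj : \rank jr = 1%N by rewrite rank_rV j0.
set U := (a + jr)%MS.
have decU (u : 'rV_n) : (u <= U)%MS ->
    exists c1 c2 : 'M_1, u = c1 *m a + c2 *m jr.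
  by case/sub_addsmxP => [[c1 c2] /= ->]; exists c1, c2.
have rU : \rank U = 2%N.
  have := mxrank_sum_cap a jr; rewrite ra rj.
  suff -> : \rank (a :&: jr) = 0%N by rewrite addn0.
  apply/eqP; rewrite mxrank_eq0 -submx0; apply/row_subP => i.
  set u := row i _.
  have : (u <= a :&: jr)%MS by exact: row_sub.
  rewrite sub_capmx => /andP[/submxP[d hd] /submxP[c hc]].
  have : u *m ex^T = 0 by rewrite hd -mulmxA aex mulmx0.
  rewrite hc -mulmxA jex mulmx1 => c0.
  by rewrite c0 mul0mx sub0mx.
have aA : (a <= A)%MS by rewrite ha submxMl.
have BU : (B + U :=: A + U)%MS.
  apply/eqmxP; apply/andP; split; rewrite addsmx_sub addsmxSr andbT.
    rewrite hB; apply: addmx_sub; first apply: addmx_sub.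
    - exact: addsmxSl.
    - apply: submx_trans (submxMl _ _) _.
      by apply: submx_trans (addsmxSr a jr) _; exact: addsmxSr.
    - apply: submx_trans (submxMl _ _) _.
      by apply: submx_trans (addsmxSl a jr) _; exact: addsmxSr.
  have -> : A = B - jr^T *m a - a^T *m jr by rewrite hB !addrK.
  apply: addmx_sub; first apply: addmx_sub.
  - exact: addsmxSl.
  - rewrite eqmx_opp; apply: submx_trans (submxMl _ _) _.
    by apply: submx_trans (addsmxSl a jr) _; exact: addsmxSr.
  - rewrite eqmx_opp; apply: submx_trans (submxMl _ _) _.
    by apply: submx_trans (addsmxSr a jr) _; exact: addsmxSr.
have sc := mxrank_sum_cap B U.
rewrite BU rU in sc.
rewrite trmx_const symA -/jr.
case: ifP => jA.
-
  case/submxP: jA => w hw.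
  have wB : w *m B = 0.
    rewrite hB !mulmxDr !mulmxA -hw.
    have -> : w *m a^T = 1%:M by rewrite ha trmx_mul symA mulmxA -hw jex.
    have -> : w *m jr^T = 0 by rewrite hw trmx_mul symA mulmxA alt_form.
    by rewrite mul1mx mul0mx addr0 addxxM.
  have cap0 : \rank (B :&: U) = 0%N.
    apply/eqP; rewrite mxrank_eq0 -submx0; apply/row_subP => i.
    set u := row i _.
    have : (u <= B :&: U)%MS by exact: row_sub.
    rewrite sub_capmx => /andP[/submxP[d hd] /decU[c1 [c2 hc]]].
    have : u *m ex^T = 0 by rewrite hd -mulmxA Bx mulmx0.
    rewrite hc mulmxDl -!mulmxA aex jex mulmx0 add0r mulmx1 => c20.
    have : u *m w^T = 0.
      by rewrite hd -mulmxA -symB -trmx_mul wB trmx0 mulmx0.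
    rewrite hc c20 mul0mx addr0 -mulmxA.
    have -> : a *m w^T = 1%:M.
      by rewrite ha -mulmxA -[A *m w^T]trmxK trmx_mul trmxK symA -hw -[ex]trmxK -trmx_mul jex trmx1.
    by rewrite mulmx1 => c10; rewrite c10 !mul0mx ?addr0 ?sub0mx.
  have AU : (A + U :=: A)%MS.
    by apply/addsmx_idPl; rewrite addsmx_sub aA; apply/submxP; exists w.
  rewrite AU cap0 in sc; lia.
-
  have [z [zA zj]] := @dual n A jr (negbT jA).
  rewrite symA in zA.
  have zB : z *m B = a.
    rewrite hB !mulmxDr zA add0r !mulmxA.
    have -> : z *m a^T = 0 by rewrite ha trmx_mul symA mulmxA zA mul0mx.
    have -> : z *m jr^T = 1%:M by rewrite -[z]trmxK -trmx_mul (mx1_01 _ zj) trmx1.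
    by rewrite mul0mx add0r mul1mx.
  have aB : (a <= B)%MS by rewrite -zB submxMl.
  have cap1 : \rank (B :&: U) = 1%N.
    apply/eqP; rewrite eqn_leq; apply/andP; split; last first.
      have h1 : (a <= B :&: U)%MS by rewrite sub_capmx aB addsmxSl.
      by have := mxrankS h1; rewrite ra.
    have sU : (B :&: U <= U)%MS by exact: capmxSr.
    have := mxrank_leqif_eq sU; rewrite rU => [[le eqc]].
    rewrite leq_eqVlt in le; case/orP: le => [/eqP h|]; last by [].
    move: eqc; rewrite h eqxx => /esym /andP[_ UB].
    have jB : (jr <= B)%MS.
      apply: submx_trans (addsmxSr a jr) _; apply: submx_trans UB _.
      exact: capmxSl.
    case/submxP: jB => d hd.
    have := jex; rewrite hd -mulmxA Bx mulmx0 => h0.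
    by move: one_neq0; rewrite -h0 eqxx.
  have capj : \rank (A :&: jr) = 0%N.
    have := mxrank_leqif_eq (capmxSr A jr); rewrite rj => [[le eqc]].
    rewrite leq_eqVlt in le; case/orP: le => [/eqP h|]; last by rewrite ltnS leqn0 => /eqP.
    move: eqc; rewrite h eqxx => /esym /andP[_ jc].
    by move: jA; rewrite (submx_trans jc (capmxSl _ _)).
  have sj := mxrank_sum_cap A jr.
  rewrite capj rj in sj.
  have AU : (A + U == A + jr)%MS.
    apply/andP; split.
      by rewrite addsmx_sub addsmxSl /U addsmx_sub addsmxSr andbT (submx_trans aA (addsmxSl _ _)).
    by apply: addsmxS => //; exact: addsmxSr.
  rewrite (eqmx_rank AU) cap1 in sc; lia.
Qed.
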